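(* There exist, for every (sufficiently large) $n$, positive real weights $w_n\ge\dots\ge w_1>0$ and a bound $B\in\{1,\dots,n\}$ such that RLS (defined in the context), started from a uniformly random initial search point in $\{0,1\}^n$ and minimising the penalised fitness \[ f(x)=\sum_{i=1}^n w_i x_i+\max\{0,\,B-b(x)\}\cdot(n w_n+1),\qquad b(x)=\sum_{i=1}^n x_i , \] has expected optimisation time $\Omega(n^2)$.
   Context: Problem: minimise $f_{\mathrm{obj}}(x)=\sum_{i=1}^n w_ix_i$ over $x\in\{0,1\}^n$ subject to the uniform constraint $x_1+\dots+x_n\ge B$. A search point is optimal if it satisfies the constraint and minimises $f_{\mathrm{obj}}$ among all points satisfying the constraint. RLS: maintain a current search point $x_t$ ($x_0$ uniform on $\{0,1\}^n$); in each iteration choose $b\in\{1,2\}$ uniformly at random, create $x'$ by flipping $b$ distinct bits of $x_t$ chosen uniformly at random; set $x_{t+1}=x'$ if $f(x')\le f(x_t)$, otherwise $x_{t+1}=x_t$. The optimisation time is the number of iterations until an optimal search point has been sampled for the first time. *)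

(* Defs.v *)
From HB Require Import structures.
From mathcomp Require Import all_boot all_order all_algebra.
From mathcomp Require Import Rstruct.
Set Implicit Arguments. Unset Strict Implicit. Unset Printing Implicit Defensive.
Import Order.TTheory GRing.Theory Num.Theory.
Local Open Scope ring_scope.

Notation R := Rdefinitions.R.

(* Search points: bit strings of length n, x_i for i : 'I_n
   (paper index i+1). Weights are given as w : nat -> R, with the paper's
   w_1,...,w_n being w 1, ..., w n. *)
Definition bits (n : nat) := {ffun 'I_n -> bool}.

Definition ones n (x : bits n) : nat := \sum_(i < n) (x i : nat).

Definition fobj n (w : nat -> R) (x : bits n) : R :=
  \sum_(i < n) (if x i then w i.+1 else 0).

Definition fpen n (w : nat -> R) (B : nat) (x : bits n) : R :=
  fobj w x + (B - ones x)%N%:R * (n%:R * w n + 1).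

Definition feasible n (B : nat) (x : bits n) : bool := (B <= ones x)%N.

Definition optimal n (w : nat -> R) (B : nat) (x : bits n) : bool :=
  feasible B x && [forall y : bits n, feasible B y ==> (fobj w x <= fobj w y)].

Definition ind (b : bool) : R := if b then 1 else 0.

Definition hdist n (x y : bits n) : nat := #|[set i : 'I_n | x i != y i]|.

(* mutation of RLS: b in {1,2} uniformly, then b distinct bits flipped
   uniformly at random: probability that offspring of x is y *)
Definition mut n (x y : bits n) : R :=
  (1 / 2) * (ind (hdist x y == 1)%N / ('C(n, 1))%:R)
  + (1 / 2) * (ind (hdist x y == 2)%N / ('C(n, 2))%:R).

Definition trans n (w : nat -> R) (B : nat) (x y : bits n) : R :=
  mut x y * ind (fpen w B y <= fpen w B x)
  + ind (y == x) * \sum_(z : bits n) mut x z * ind (fpen w B x < fpen w B z).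

(* q t y = Pr[x_0,...,x_t are all non-optimal and x_t = y],
   x_0 uniform on {0,1}^n *)
Fixpoint surv_mass n (w : nat -> R) (B : nat) (t : nat) (y : bits n) : R :=
  ind (~~ optimal w B y) *
  match t with
  | 0 => 1 / (2 ^ n)%:R
  | t'.+1 => \sum_(x : bits n) surv_mass w B t' x * trans w B x y
  end.

(* Pr[T > t], T = first t with x_t optimal (optimisation time) *)
Definition surv n (w : nat -> R) (B : nat) (t : nat) : R :=
  \sum_(y : bits n) surv_mass w B t y.
Arguments surv n w B t : clear implicits.

(* E[T] >= a, where E[T] = sum_{t >= 0} Pr[T > t] (possibly infinite):
   the partial sums (nondecreasing) have supremum >= a *)
Definition expected_time_ge n (w : nat -> R) (B : nat) (a : R) : Prop :=
  forall eps : R, 0 < eps ->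
    exists K : nat, a - eps <= \sum_(t < K) surv n w B t.
Arguments expected_time_ge n w B a : clear implicits.

(* Main.v *)
Require Import Defs.
From HB Require Import structures.
From mathcomp Require Import all_boot all_order all_algebra.
From mathcomp Require Import Rstruct.
From mathcomp Require Import ring lra zify.
Import Order.TTheory GRing.Theory Num.Theory.
Local Open Scope ring_scope.
Set Implicit Arguments. Unset Strict Implicit. Unset Printing Implicit Defensive.

Definition wt (i : nat) : R := if i == 1%N then 1 else 2.

Definition flip n (x : bits n) (j : 'I_n) : bits n :=
  [ffun i => if i == j then ~~ x i else x i].

Definition gf m (r : R) (x : bits m.+1) : R :=
  if x ord0 then 0 else if ones x == 0%N then 0 else r ^+ ones x.

Lemma ind_ge0 b : 0 <= ind b. Proof. by case: b; rewrite /ind. Qed.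
Lemma ind_le1 b : ind b <= 1. Proof. by case: b; rewrite /ind. Qed.
Lemma indE b : ind b = (b : nat)%:R. Proof. by case: b. Qed.

Lemma onesE n (x : bits n) : ones x = (\sum_(i < n) (x i : nat))%N.
Proof. by []. Qed.

Lemma ones_le n (x : bits n) : (ones x <= n)%N.
Proof.
rewrite onesE -[X in (_ <= X)%N]card_ord -sum1_card.
by apply: leq_sum => i _; case: (x i).
Qed.

Lemma ones_flip n (x : bits n) (j : 'I_n) :
  (ones (flip x j) + (x j : nat) = ones x + (~~ x j : nat))%N.
Proof.
rewrite !onesE (bigD1 j) //= [in RHS](bigD1 j) //= ffunE eqxx.
rewrite (eq_bigr (fun i => (x i : nat))); last first.
  by move=> i /negbTE hi; rewrite ffunE hi.
case: (x j) => /=; lia.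
Qed.

Lemma fobjE m (x : bits m.+1) :
  fobj wt x = 2 * (ones x)%:R - ind (x ord0).
Proof.
rewrite /fobj big_ord_recl onesE big_ord_recl /= natrD natr_sum mulrDr mulr_sumr.
rewrite (eq_bigr (fun i => 2 * ((x (lift ord0 i) : nat)%:R : R))); last first.
  by move=> i _; rewrite /wt /=; case: (x _) => /=; rewrite ?mulr1 ?mulr0.
by rewrite /wt /=; case: (x ord0); rewrite /ind /=; lra.
Qed.

Lemma fpenE m (x : bits m.+1) : (0 < m)%N ->
  fpen wt 1 x = 2 * (ones x)%:R - ind (x ord0)
     + ind (ones x == 0%N) * (2 * (m.+1)%:R + 1).
Proof.
move=> m0; rewrite /fpen fobjE /wt.
have -> : (m.+1 == 1%N) = false by apply/negbTE; rewrite eqSS -lt0n.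
congr (_ + _ * _); last by rewrite mulrC.
by case: (ones x) => [|k] /=; rewrite /ind.
Qed.

Lemma bin2E n : ('C(n, 2) * 2 = n * n.-1)%N.
Proof.
elim: n => [|n IH] //; rewrite binS bin1 mulnDl IH; case: n {IH} => //= n; lia.
Qed.

Lemma flip_inj n (x : bits n) j j' : flip x j = flip x j' -> j = j'.
Proof.
move/ffunP/(_ j); rewrite !ffunE eqxx; case: eqP => // _; by case: (x j).
Qed.

Lemma hd_flip n (x : bits n) j : hdist x (flip x j) = 1%N.
Proof.
rewrite /hdist (_ : [set i | _] = [set j]) ?cards1 //; apply/setP => i.
by rewrite !inE ffunE; case: (i == j); case: (x i).
Qed.

Definition flip2 m (x : bits m.+1) j := flip (flip x ord0) j.

Lemma hd_flip2 m (x : bits m.+1) j : j != ord0 -> hdist x (flip2 x j) = 2%N.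
Proof.
move=> hj; rewrite /hdist (_ : [set i | _] = [set ord0; j]).
  by rewrite cards2 eq_sym hj.
apply/setP => i.
rewrite !inE !ffunE; case: (i =P j) => [->|_]; first by rewrite (negbTE hj) orbT; case: (x j).
by case: (i == ord0); case: (x i).
Qed.

Lemma mut1 n (x z : bits n) : hdist x z = 1%N -> mut x z = 1/2 * (1 / n%:R).
Proof. by move=> h; rewrite /mut h bin1 /ind /=; lra. Qed.

Lemma mut2 n (x z : bits n) : hdist x z = 2%N -> mut x z = 1 / (n * n.-1)%:R.
Proof.
move=> h; rewrite /mut h /ind /= -bin2E natrM; lra.
Qed.

Lemma mut_ge0 n (x z : bits n) : 0 <= mut x z.
Proof.
rewrite /mut; apply: addr_ge0; apply: mulr_ge0 => //; apply: divr_ge0 => //; exact: ind_ge0.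
Qed.
Lemma hd_count n (x : bits n) k :
  \sum_(z : bits n) ind (hdist x z == k) = ('C(n, k))%:R.
Proof.
pose h := fun S : {set 'I_n} => ([ffun i => x i (+) (i \in S)] : bits n).
have hK : forall S, [set i | x i != h S i] = S.
  by move=> S; apply/setP => i; rewrite inE ffunE; case: (x i); case: (i \in S).
have bij : bijective h.
  exists (fun z : bits n => [set i | x i != z i]) => //.
  by move=> z; apply/ffunP => i; rewrite ffunE inE; case: (x i); case: (z i).
rewrite (reindex h) /=; last by apply: onW_bij.
rewrite (eq_bigr (fun S : {set 'I_n} => if #|S| == k then 1 else 0)); last first.
  by move=> S _; rewrite /hdist hK.
rewrite -big_mkcond sumr_const.
have := card_draws 'I_n k; rewrite card_ord cardsE => <-.
by rewrite -mulr_natl mulr1.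
Qed.

Lemma mut_sum m (x : bits m.+2) : \sum_(z : bits m.+2) mut x z = 1.
Proof.
rewrite /mut big_split /= -!mulr_sumr -!mulr_suml !hd_count.
have h1 : ('C(m.+2, 1))%:R != 0 :> R by rewrite bin1 pnatr_eq0.
have h2 : ('C(m.+2, 2))%:R != 0 :> R by rewrite pnatr_eq0 -lt0n bin_gt0.
rewrite !divff //; lra.
Qed.

Lemma bit_le_ones n (x : bits n) i : ((x i : nat) <= ones x)%N.
Proof. by rewrite onesE (bigD1 i) //= leq_addr. Qed.

Lemma ones_strict n (x z : bits n) i0 :
  (forall i, x i -> z i) -> x i0 = false -> z i0 = true -> (ones x < ones z)%N.
Proof.
move=> hxz hx hz; rewrite !onesE (bigD1 i0) //= [X in (_ < X)%N](bigD1 i0) //= hx hz.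
rewrite add0n add1n ltnS; apply: leq_sum => i _.
by case hi: (x i) => //; rewrite (hxz _ hi).
Qed.

Lemma accF m (x z : bits m.+1) : (0 < m)%N -> x ord0 = false -> (0 < ones x)%N ->
  fpen wt 1 z <= fpen wt 1 x ->
  (0 < ones z)%N /\ (2 * ones z <= 2 * ones x + z ord0)%N.
Proof.
move=> m0 hx0 kx hF; move: hF; rewrite !fpenE // hx0 /ind /=.
have -> : (ones x == 0%N) = false by apply/negbTE; rewrite -lt0n.
have hxle := ones_le x; have hz0 := bit_le_ones z ord0.
case hkz: (ones z == 0%N).
  move/eqP: hkz => hkz; rewrite hkz in hz0; move: hz0; case: (z ord0) => //= _.
  rewrite hkz /= => H; exfalso.
  have : (((2 * m.+1 + 1)%N)%:R <= ((2 * ones x)%N)%:R :> R) by rewrite !natrD !natrM; lra.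
  rewrite ler_nat; lia.
move=> H; split; first by rewrite lt0n hkz.
have : (((2 * ones z)%N)%:R <= ((2 * ones x + z ord0)%N)%:R :> R).
  by rewrite !natrD; move: H; case: (z ord0) => /=; lra.
by rewrite ler_nat.
Qed.

Lemma gf_ge0 m r (x : bits m.+1) : 0 <= r -> 0 <= gf r x.
Proof. by move=> r0; rewrite /gf; case: (x ord0) => //; case: (_ == _) => //; exact: exprn_ge0. Qed.

Lemma gf_le1 m r (x : bits m.+1) : 0 <= r -> r <= 1 -> gf r x <= 1.
Proof. by move=> r0 r1; rewrite /gf; case: (x ord0) => //; case: (_ == _) => //; exact: exprn_ile1. Qed.

Lemma ones0 n : ones ([ffun => false] : bits n) = 0%N.
Proof. by rewrite onesE big1 // => i _; rewrite ffunE. Qed.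

Lemma gf_nonopt m r (y : bits m.+1) : gf r y != 0 -> ~~ optimal wt 1 y.
Proof.
rewrite /gf; case hy0: (y ord0); first by rewrite eqxx.
case hk: (ones y == 0%N); first by rewrite eqxx.
move=> _; apply/negP => /andP [_ /forallP H].
pose e := flip ([ffun => false] : bits m.+1) ord0.
have he : ones e = 1%N.
  by rewrite /e; move: (ones_flip ([ffun => false] : bits m.+1) ord0); rewrite ones0 ffunE /=; lia.
have := H e; rewrite /feasible he /= !fobjE he hy0 /e ffunE eqxx ffunE /ind /= mulr1n.
have h1 : 1 <= (ones y)%:R :> R by rewrite ler1n lt0n hk.
move=> h2; clear -h1 h2; lra.
Qed.

Lemma contraB m (x z : bits m.+1) : (0 < m)%N -> x ord0 = false -> z ord0 = true ->
  (0 < ones x)%N -> fpen wt 1 z <= fpen wt 1 x -> (hdist x z <= 2)%N ->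
  exists j, x j /\ z = flip2 x j.
Proof.
move=> m0 hx0 hz0 kx hF hd.
have [kz0 hkz] := accF m0 hx0 kx hF; rewrite hz0 /= in hkz.
case: (boolP [forall i, x i ==> z i]) => [/forallP hall | ].
  have := @ones_strict _ x z ord0 (fun i => implyP (hall i)) hx0 hz0; lia.
rewrite negb_forall => /existsP [j]; rewrite negb_imply => /andP [hj hzj].
have j0 : j != ord0 by apply/eqP => e; rewrite e hx0 in hj.
have sub : [set ord0; j] \subset [set i | x i != z i].
  apply/subsetP => i; rewrite !inE => /orP [/eqP -> | /eqP ->]; first by rewrite hx0 hz0.
  by rewrite hj; case: (z j) hzj.
have eqD : [set ord0; j] = [set i | x i != z i].
  by apply/eqP; rewrite eqEcard sub /= cards2 eq_sym j0.
exists j; split => //; apply/ffunP => i; rewrite /flip2 !ffunE.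
have : (i \in [set i | x i != z i]) = (i == ord0) || (i == j) by rewrite -eqD !inE.
rewrite inE; case: (i =P j) => [-> | /eqP nij].
  by rewrite (negbTE j0) hj; move: hzj; case: (z j).
case: (i == ord0); by case: (x i); case: (z i).
Qed.

Definition N1 m (x z : bits m.+1) := \sum_j ind (x j && (z == flip x j)).
Definition N2 m (x z : bits m.+1) := \sum_j ind (x j && (z == flip2 x j)).

Lemma N1_ge0 m (x z : bits m.+1) : 0 <= N1 x z.
Proof. by apply: sumr_ge0 => j _; apply: ind_ge0. Qed.
Lemma N2_ge0 m (x z : bits m.+1) : 0 <= N2 x z.
Proof. by apply: sumr_ge0 => j _; apply: ind_ge0. Qed.

Lemma N1_0 m (x z : bits m.+1) : x ord0 = false -> z ord0 = true -> N1 x z = 0.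
Proof.
move=> hx hz; apply: big1 => j _; case: (x j =P true) => [hj|/negP/negbTE ->] //.
rewrite hj /=; case: eqP => [ez|] //; exfalso; move: hz; rewrite ez ffunE.
case: (ord0 =P j) => [e|_]; [by rewrite -e hx in hj | by rewrite hx].
Qed.

Lemma N2_0 m (x z : bits m.+1) : x ord0 = false -> z ord0 = false -> N2 x z = 0.
Proof.
move=> hx hz; apply: big1 => j _; case: (x j =P true) => [hj|/negP/negbTE ->] //.
rewrite hj /=; case: eqP => [ez|] //; exfalso; move: hz; rewrite ez /flip2 !ffunE eqxx.
case: (ord0 =P j) => [e|_]; [by rewrite -e hx in hj | by rewrite hx].
Qed.

Lemma N1_1 m (x z : bits m.+1) j : x j -> z = flip x j -> N1 x z = 1.
Proof.
move=> hj ez; rewrite /N1 (bigD1 j) //= hj ez eqxx big1 ?addr0 //.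
move=> i nij; case: eqP => [/flip_inj e|]; last by rewrite andbF.
by rewrite e eqxx in nij.
Qed.

Lemma N2_ge1 m (x z : bits m.+1) j : x j -> z = flip2 x j -> 1 <= N2 x z.
Proof.
move=> hj ez; rewrite /N2 (bigD1 j) //= hj ez eqxx /ind /= lerDl.
by apply: sumr_ge0 => i _; apply: ind_ge0.
Qed.

Lemma N1_none m (x z : bits m.+1) : ~~ [exists j, x j && (z == flip x j)] -> N1 x z = 0.
Proof. by rewrite negb_exists => /forallP H; apply: big1 => j _; rewrite (negbTE (H j)). Qed.

Definition acoef m (r : R) (k : nat) : R :=
  if (1 < k)%N then 1/2 * (1 / (m.+1)%:R) * (r ^+ k.-1 - r ^+ k) else 0.
Definition ccoef m (r : R) (k : nat) : R := 1 / (m.+1 * m)%:R * r ^+ k.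

Lemma gfx m r (x : bits m.+1) : x ord0 = false -> (0 < ones x)%N -> gf r x = r ^+ ones x.
Proof. by move=> hx kx; rewrite /gf hx; case: eqP => // e; rewrite e in kx. Qed.

Lemma pointwise m r (x z : bits m.+1) : (1 < m)%N -> 0 <= r -> r <= 1 ->
  x ord0 = false -> (0 < ones x)%N ->
  acoef m r (ones x) * N1 x z - ccoef m r (ones x) * N2 x z <=
  mut x z * ind (fpen wt 1 z <= fpen wt 1 x) * (gf r z - gf r x).
Proof.
move=> hm r0 r1 hx0 kx; have m0 : (0 < m)%N by lia.
rewrite (gfx r hx0 kx).
have i0 := ind_ge0 (fpen wt 1 z <= fpen wt 1 x).
have i1 := ind_le1 (fpen wt 1 z <= fpen wt 1 x).
have rk0 : 0 <= r ^+ ones x by apply: exprn_ge0.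
case hz0: (z ord0).
- have gz : gf r z = 0 by rewrite /gf hz0.
  rewrite N1_0 // gz mulr0 add0r sub0r.
  case: (boolP [exists j, x j && (z == flip2 x j)]) => [/existsP [j /andP [hj /eqP ez]] | nex].
    have j0 : j != ord0 by apply/eqP => e; rewrite e hx0 in hj.
    have h1 := N2_ge1 hj ez.
    rewrite (@mut2 _ x z); last by rewrite ez hd_flip2.
    rewrite /ccoef /=.
    have q0 : 0 <= 1 / (m.+1 * m)%:R :> R by apply: divr_ge0.
    set q := 1 / _; set A := ind _; set N := N2 x z; set P := r ^+ _.
    have qP : 0 <= q * P by apply: mulr_ge0.
    have e1 : q * A * - P = - (q * P * A) by rewrite mulrN mulrAC.
    rewrite e1 lerN2.
    have : q * P * A <= q * P * 1 by apply: ler_wpM2l.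
    have : q * P * 1 <= q * P * N by apply: ler_wpM2l => //; lra.
    lra.
  have -> : mut x z * ind (fpen wt 1 z <= fpen wt 1 x) = 0.
    case hacc: (fpen wt 1 z <= fpen wt 1 x); last by rewrite /ind mulr0.
    rewrite /mut; case hd1: (hdist x z == 1%N); case hd2: (hdist x z == 2%N);
      rewrite /ind /=; try by rewrite !(mul0r, mulr0, addr0).
    + by move/eqP: hd1 => e1; move/eqP: hd2 => e2; rewrite e1 in e2.
    + have hd : (hdist x z <= 2)%N by move/eqP: hd1 => ->.
      have [j [hj ez]] := contraB m0 hx0 hz0 kx hacc hd.
      by move: nex; rewrite negb_exists => /forallP /(_ j); rewrite hj ez eqxx.
    + have hd : (hdist x z <= 2)%N by move/eqP: hd2 => ->.
      have [j [hj ez]] := contraB m0 hx0 hz0 kx hacc hd.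
      by move: nex; rewrite negb_exists => /forallP /(_ j); rewrite hj ez eqxx.
  rewrite mul0r oppr_le0; apply: mulr_ge0; last exact: N2_ge0.
  by rewrite /ccoef; apply: mulr_ge0 => //; apply: divr_ge0.
- rewrite N2_0 // mulr0 subr0.
  case: (boolP ((1 < ones x)%N && [exists j, x j && (z == flip x j)])) =>
     [/andP [k2 /existsP [j /andP [hj /eqP ez]]] | hn].
    rewrite (N1_1 hj ez) mulr1 (@mut1 _ x z); last by rewrite ez hd_flip.
    have oz : ones z = (ones x).-1.
      by move: (ones_flip x j); rewrite -ez hj /=; lia.
    have oz0 : (ones z == 0%N) = false by apply/negbTE; rewrite oz; lia.
    have -> : ind (fpen wt 1 z <= fpen wt 1 x) = 1.
      rewrite !fpenE // hz0 hx0 oz0 /ind.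
      have -> : (ones x == 0%N) = false by apply/negbTE; lia.
      have : ((ones z)%:R <= (ones x)%:R :> R) by rewrite ler_nat oz; lia.
      by move=> h; case: ifP => //; move/negbT; rewrite -ltNge => h'; exfalso; lra.
    rewrite /gf hz0 oz0 oz /acoef k2 mulr1.
    by [].
  have -> : acoef m r (ones x) * N1 x z = 0.
    move: hn; rewrite negb_and => /orP [k1 | nex].
      by rewrite /acoef (negbTE k1) mul0r.
    by rewrite N1_none // mulr0.
  case hacc: (fpen wt 1 z <= fpen wt 1 x); last by rewrite /ind mulr0 mul0r.
  have [kz0 hkz] := accF m0 hx0 kx hacc; rewrite hz0 /= in hkz.
  apply: mulr_ge0; first by apply: mulr_ge0; [apply: mut_ge0 | apply: ind_ge0].
  rewrite subr_ge0 (gfx r hz0 kz0); apply: ler_wiXn2l => //; lia.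
Qed.

Lemma sum_ind_eq (T : finType) (b : bool) (c : T) :
  \sum_(z : T) ind (b && (z == c)) = ind b.
Proof.
case: b => /=; last by rewrite big1 // => z _; rewrite /ind.
by rewrite (bigD1 c) //= eqxx big1 ?addr0 // => z /negbTE ->.
Qed.

Lemma sum_ind_ones n (x : bits n) : \sum_j ind (x j) = (ones x)%:R.
Proof. by rewrite onesE natr_sum; apply: eq_bigr => j _; rewrite indE. Qed.

Lemma sumN1 m (x : bits m.+1) : \sum_z N1 x z = (ones x)%:R.
Proof. by rewrite /N1 exchange_big /= -sum_ind_ones; apply: eq_bigr => j _; rewrite sum_ind_eq. Qed.
Lemma sumN2 m (x : bits m.+1) : \sum_z N2 x z = (ones x)%:R.
Proof. by rewrite /N2 exchange_big /= -sum_ind_ones; apply: eq_bigr => j _; rewrite sum_ind_eq. Qed.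

Lemma mut_sum_gen m (x : bits m.+1) : (0 < m)%N -> \sum_z mut x z = 1.
Proof. by case: m x => // m x _; apply: mut_sum. Qed.

Lemma ind_lt (a b : R) : ind (a < b) = 1 - ind (b <= a).
Proof. by rewrite ltNge; case: (b <= a); rewrite /ind /=; lra. Qed.

Lemma step1 m r (x : bits m.+1) : (0 < m)%N ->
  \sum_y trans wt 1 x y * gf r y =
  gf r x + \sum_z mut x z * ind (fpen wt 1 z <= fpen wt 1 x) * (gf r z - gf r x).
Proof.
move=> m0; rewrite /trans.
under eq_bigr do rewrite mulrDl.
rewrite big_split /=.
set S := \sum_z mut x z * ind (fpen wt 1 x < fpen wt 1 z).
have -> : \sum_i ind (i == x) * S * gf r i = S * gf r x.
  rewrite (bigD1 x) //= eqxx big1 ?addr0 /ind ?mul1r //.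
  by move=> y /negbTE ->; rewrite !mul0r.
rewrite /S mulr_suml.
under [X in _ + X = _]eq_bigr do rewrite ind_lt.
have hs := mut_sum_gen x m0.
rewrite [in RHS](eq_bigr (fun z => mut x z * ind (fpen wt 1 z <= fpen wt 1 x) * gf r z - mut x z * ind (fpen wt 1 z <= fpen wt 1 x) * gf r x)); last by move=> i _; ring.
rewrite [in RHS]sumrB.
have -> : \sum_i mut x i * (1 - ind (fpen wt 1 i <= fpen wt 1 x)) * gf r x
   = gf r x * \sum_i mut x i - \sum_i mut x i * ind (fpen wt 1 i <= fpen wt 1 x) * gf r x.
  rewrite mulr_sumr -sumrB; apply: eq_bigr => i _; ring.
rewrite hs; lra.
Qed.

Lemma drift m r (x : bits m.+1) : (1 < m)%N -> r = m%:R / (m.+2)%:R ->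
  x ord0 = false -> (0 < ones x)%N ->
  (1 - 1 / (m.+1 * m)%:R) * gf r x <= \sum_y trans wt 1 x y * gf r y.
Proof.
move=> hm hr hx0 kx; have m0 : (0 < m)%N by lia.
have r0 : 0 <= r by rewrite hr; apply: divr_ge0.
have r1 : r <= 1.
  by rewrite hr ler_pdivrMr ?ltr0n // mul1r ler_nat; lia.
rewrite step1 //.
have H : \sum_z (acoef m r (ones x) * N1 x z - ccoef m r (ones x) * N2 x z) <=
   \sum_z mut x z * ind (fpen wt 1 z <= fpen wt 1 x) * (gf r z - gf r x).
  by apply: ler_sum => z _; apply: pointwise.
move: H; rewrite sumrB -!mulr_sumr sumN1 sumN2 (gfx r hx0 kx) => H.
suff : (1 - 1 / (m.+1 * m)%:R) * r ^+ ones x <=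
   r ^+ ones x + (acoef m r (ones x) * (ones x)%:R - ccoef m r (ones x) * (ones x)%:R).
  by move=> h; apply: (le_trans h); rewrite lerD2l.
rewrite /acoef /ccoef; case: ifP => k2.
  have [k' ek] : exists k', ones x = k'.+1 by exists (ones x).-1; lia.
  rewrite ek /= exprS.
  have e : 1 / 2 * (1 / m.+1%:R) * (r ^+ k' - r * r ^+ k') =
           1 / (m.+1 * m)%:R * (r * r ^+ k').
    rewrite hr natrM -[m.+2]addn2 -[m.+1]addn1 !natrD; field.
    have hm2 : 0 < m%:R :> R by rewrite ltr0n.
    by apply/and3P; split; rewrite gt_eqF //; lra.
  rewrite e subrr addr0 mulrBl [1 * (r * _)]mul1r lerBlDr lerDl.
  by apply: mulr_ge0; [apply: divr_ge0 | apply: mulr_ge0 => //; apply: exprn_ge0].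
have ek : ones x = 1%N by lia.
by rewrite ek mul0r mulr1 sub0r mulrBl [1 * r ^+ 1]mul1r.
Qed.

Lemma trans_ge0 n w B (x y : bits n) : 0 <= trans w B x y.
Proof.
rewrite /trans; apply: addr_ge0; apply: mulr_ge0; try apply: ind_ge0; try apply: mut_ge0.
by apply: sumr_ge0 => z _; apply: mulr_ge0; [apply: mut_ge0 | apply: ind_ge0].
Qed.

Lemma surv_mass_ge0 n w B t (y : bits n) : 0 <= surv_mass w B t y.
Proof.
elim: t y => [|t IH] y /=; apply: mulr_ge0; try apply: ind_ge0.
  by apply: divr_ge0.
by apply: sumr_ge0 => x _; apply: mulr_ge0; [apply: IH | apply: trans_ge0].
Qed.

Definition mt m r t := \sum_(y : bits m.+1) surv_mass wt 1 t y * gf r y.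

Lemma ind_gf m r (y : bits m.+1) : ind (~~ optimal wt 1 y) * gf r y = gf r y.
Proof.
case: (gf r y =P 0) => [->|/eqP h]; first by rewrite mulr0.
by rewrite (gf_nonopt h) /ind mul1r.
Qed.

Lemma drift_all m r (x : bits m.+1) : (1 < m)%N -> r = m%:R / (m.+2)%:R ->
  (1 - 1 / (m.+1 * m)%:R) * gf r x <= \sum_y trans wt 1 x y * gf r y.
Proof.
move=> hm hr.
have r0 : 0 <= r by rewrite hr; apply: divr_ge0.
case hx0: (x ord0).
  have -> : gf r x = 0 by rewrite /gf hx0.
  rewrite mulr0; apply: sumr_ge0 => y _; apply: mulr_ge0; [apply: trans_ge0 | exact: gf_ge0].
case hk: (ones x == 0%N).
  have -> : gf r x = 0 by rewrite /gf hx0 hk.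
  rewrite mulr0; apply: sumr_ge0 => y _; apply: mulr_ge0; [apply: trans_ge0 | exact: gf_ge0].
by apply: drift => //; rewrite lt0n hk.
Qed.

Lemma chain m r t : (1 < m)%N -> r = m%:R / (m.+2)%:R ->
  (1 - 1 / (m.+1 * m)%:R) * mt m r t <= mt m r t.+1.
Proof.
move=> hm hr; rewrite /mt /=.
under [X in _ <= X]eq_bigr do rewrite mulrAC ind_gf.
under [X in _ <= X]eq_bigr do rewrite mulr_sumr.
rewrite exchange_big /= mulr_sumr; apply: ler_sum => x _.
rewrite (eq_bigr (fun i => surv_mass wt 1 t x * (trans wt 1 x i * gf r i))); last by move=> i _; ring.
rewrite -mulr_sumr mulrCA; apply: ler_wpM2l; first exact: surv_mass_ge0.
exact: drift_all.
Qed.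

Definition Pw m (r : R) (y : bits m.+1) : R :=
  \prod_(i < m.+1) (if y i then (if i == ord0 then 0 else r) else 1).

Lemma sum_Pw m r : \sum_(y : bits m.+1) Pw r y = (1 + r) ^+ m.
Proof.
rewrite /Pw -(bigA_distr_bigA (fun (i : 'I_m.+1) (b : bool) => if b then (if i == ord0 then 0 else r) else 1)) /=.
rewrite big_ord_recl /= big_bool /= add0r mul1r.
rewrite (eq_bigr (fun _ => 1 + r)); first by rewrite prodr_const card_ord.
by move=> i _; rewrite big_bool /= addrC.
Qed.

Lemma Pw_le m r (y : bits m.+1) : 0 <= r ->
  Pw r y <= gf r y + ind (y == [ffun => false]).
Proof.
move=> r0; rewrite /Pw big_ord_recl /gf /=.
case hy0: (y ord0).
  by rewrite mul0r add0r; apply: ind_ge0.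
rewrite mul1r.
have -> : \prod_(i < m) (if y (lift ord0 i) then (if lift ord0 i == ord0 then 0 else r) else 1)
   = r ^+ ones y.
  rewrite onesE big_ord_recl hy0 add0n.
  rewrite -prodrXr; apply: eq_bigr => i _; by case: (y _).
case hk: (ones y == 0%N).
  have -> : y = [ffun => false].
    apply/ffunP => i; rewrite ffunE; move: (bit_le_ones y i); rewrite (eqP hk).
    by case: (y i).
  by rewrite eqxx ones0 /ind /= add0r.
by rewrite lerDl ind_ge0.
Qed.

Lemma sum_gf m r : 0 <= r -> (1 + r) ^+ m - 1 <= \sum_(y : bits m.+1) gf r y.
Proof.
move=> r0; rewrite -sum_Pw lerBlDr.
have -> : (1 : R) = \sum_(y : bits m.+1) ind (y == [ffun => false]).
  by rewrite (bigD1 [ffun => false]) //= eqxx big1 ?addr0 // => y /negbTE ->.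
rewrite -big_split /=; apply: ler_sum => y _; exact: Pw_le.
Qed.

Lemma mt_geom m r t : (1 < m)%N -> r = m%:R / (m.+2)%:R ->
  (1 - 1 / (m.+1 * m)%:R) ^+ t * mt m r 0 <= mt m r t.
Proof.
move=> hm hr; have q1 : 0 <= 1 - 1 / (m.+1 * m)%:R :> R.
  rewrite subr_ge0 ler_pdivrMr ?ltr0n ?muln_gt0 //; last by lia.
  by rewrite mul1r ler1n muln_gt0; lia.
elim: t => [|t IH]; first by rewrite expr0 mul1r.
rewrite exprS -mulrA; apply: le_trans (chain t hm hr).
by apply: ler_wpM2l.
Qed.

Lemma surv_ge_mt m r t : 0 <= r -> r <= 1 -> mt m r t <= surv m.+1 wt 1 t.
Proof.
move=> r0 r1; rewrite /mt /surv; apply: ler_sum => y _.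
rewrite -[X in _ <= X]mulr1; apply: ler_wpM2l; first exact: surv_mass_ge0.
exact: gf_le1.
Qed.

Lemma mt0 m r : mt m r 0 = 1 / (2 ^ m.+1)%:R * \sum_(y : bits m.+1) gf r y.
Proof.
rewrite /mt mulr_sumr; apply: eq_bigr => y _ /=.
by rewrite mulrAC ind_gf mulrC.
Qed.

Lemma bernoulli (y : R) k : 0 <= y -> y <= 1 -> 1 - k%:R * y <= (1 - y) ^+ k.
Proof.
move=> y0 y1; elim: k => [|k IH]; first by rewrite expr0 mul0r subr0.
rewrite exprS -natr1.
have h0 : 0 <= (1 - y) ^+ k by apply: exprn_ge0; lra.
have kk : 0 <= k%:R :> R by [].
nra.
Qed.

Lemma ypow m : 1 / 4 <= ((m.+1)%:R / (m.+2)%:R) ^+ m :> R.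
Proof.
set y := (m.+1)%:R / (m.+2)%:R.
have m2 : 0 < (m.+2)%:R :> R by rewrite ltr0n.
have ey : y = 1 - 1 / (m.+2)%:R.
  have m1 : 0 < (m.+1)%:R :> R by rewrite ltr0n.
  rewrite /y -[m.+2]addn1 natrD; field; rewrite gt_eqF //; lra.
have d0 : 0 <= 1 / (m.+2)%:R :> R by apply: divr_ge0; apply: ltW.
have d1 : 1 / (m.+2)%:R <= 1 :> R by rewrite ler_pdivrMr // mul1r ler1n.
have y0 : 0 <= y by rewrite ey subr_ge0.
have y1 : y <= 1 by rewrite ey lerBlDr lerDl.
set h := uphalf m.
have hb : 1 / 2 <= y ^+ h.
  rewrite ey; apply: le_trans (bernoulli h d0 d1).
  have : (h + h <= m.+2)%N by rewrite /h uphalf_half; case: (odd m) => /=; lia.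
  rewrite -(ler_nat R) natrD => H.
  have : h%:R / (m.+2)%:R <= 1/2 :> R by rewrite ler_pdivrMr //; lra.
  rewrite mulrA mulr1; set a := h%:R / _ => H2; clear -H2; lra.
have : y ^+ (h * 2) <= y ^+ m.
  apply: ler_wiXn2l => //; rewrite /h uphalf_half; move: (odd_double_half m); rewrite -addnn; lia.
rewrite exprM => H; apply: le_trans H.
rewrite expr2; set p := y ^+ h.
have : (1/2) * (1/2) <= p * p :> R by apply: ler_pM => //; lra.
move=> H2; clear -H2; set pp := p * p in H2 *; lra.
Qed.

Lemma mt0_bound m r : (2 < m)%N -> r = m%:R / (m.+2)%:R -> 1 / 16 <= mt m r 0.
Proof.
move=> hm hr.
have r0 : 0 <= r by rewrite hr; apply: divr_ge0.
set y := ((m.+1)%:R / (m.+2)%:R : R).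
have hy := ypow m; rewrite -/y in hy.
have e1 : 1 + r = 2 * y.
  have m2 : 0 < (m.+2)%:R :> R by rewrite ltr0n.
  rewrite hr /y; move: m2; rewrite -[m.+2]addn2 -[m.+1]addn1 !natrD => m2.
  by field; rewrite gt_eqF.
have hs := sum_gf m r0; rewrite e1 exprMn in hs.
rewrite mt0 natrX.
set P := (2 : R) ^+ m in hs *.
have P8 : 8 <= P.
  rewrite /P; have -> : (8 : R) = 2 ^+ 3 by rewrite !exprS expr0; lra.
  by apply: ler_weXn2l => //; lra.
have -> : (2%:R : R) ^+ m.+1 = 2 * P by rewrite exprS.
set Y := y ^+ m in hs hy *.
set S := \sum__ _ in hs *.
have P0 : 0 < 2 * P by lra.
have : 1 / (2 * P) * (P * Y - 1) <= 1 / (2 * P) * S.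
  by apply: ler_wpM2l => //; apply: divr_ge0 => //; apply: ltW.
have -> : 1 / (2 * P) * (P * Y - 1) = Y / 2 - 1 / (2 * P).
  by field; rewrite gt_eqF //; lra.
have : 1 / (2 * P) <= 1 / 16.
  by rewrite ler_pdivrMr // mulrC mulrA ler_pdivlMr //; lra.
set u := 1 / (2 * P); set v := 1 / (2 * P) * S.
lra.
Qed.

Lemma total_bound m : (2 < m)%N ->
  (m.+1 * m)%:R / 32 <= \sum_(t < m.+1 * m) surv m.+1 wt 1 t.
Proof.
move=> hm; set r : R := m%:R / (m.+2)%:R.
have r0 : 0 <= r by apply: divr_ge0.
have r1 : r <= 1 by rewrite ler_pdivrMr ?ltr0n // mul1r ler_nat; lia.
set K := (m.+1 * m)%N.
have K0 : 0 < K%:R :> R by rewrite ltr0n /K; lia.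
set q : R := 1 / K%:R.
have q0 : 0 <= q by apply: divr_ge0 => //; apply: ltW.
have q1 : q <= 1 by rewrite ler_pdivrMr // mul1r ler1n /K; lia.
have m16 := mt0_bound hm (erefl r).
have step : forall t : 'I_K, (1 - (t : nat)%:R * q) / 16 <= surv m.+1 wt 1 t.
  move=> t; apply: le_trans (surv_ge_mt _ _ r0 r1).
  apply: le_trans (mt_geom _ (ltnW hm) (erefl r)).
  have b := bernoulli t q0 q1.
  have p0 : 0 <= (1 - q) ^+ t by apply: exprn_ge0; lra.
  apply: le_trans (ler_wpM2l p0 m16).
  move: b; set A := (1 - q) ^+ t; set T := (t : nat)%:R * q => b; lra.
apply: le_trans (ler_sum _ (fun t _ => step t)).
rewrite -mulr_suml sumrB sumr_const card_ord -mulr_suml -natr_sum.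
have -> : (\sum_(i < K) (i : nat))%N = 'C(K, 2) by rewrite -bin2_sum big_mkord.
have hC : ('C(K, 2) * 2 = K * K.-1)%N := bin2E K.
have : (('C(K, 2) * 2)%N)%:R = ((K * K.-1)%N)%:R :> R by rewrite hC.
rewrite (natrM _ ('C(K, 2)) 2) (natrM _ K K.-1).
have -> : (K.-1)%:R = K%:R - 1 :> R.
  have hK : K = (K.-1).+1 by rewrite /K; lia.
  by rewrite [in RHS]hK -natr1 addrK.
move=> hC'.
have -> : 'C(K, 2)%:R * q = (K%:R - 1) / 2.
  have eC : ('C(K, 2))%:R = K%:R * (K%:R - 1) / 2%:R :> R.
    by rewrite -hC'; field.
  rewrite eC /q; field; rewrite ?(gt_eqF K0) ?pnatr_eq0 //.

set k := K%:R in K0 *; lra.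
Qed.

Theorem theorem4 :
  exists c : R, 0 < c /\
  exists N : nat, forall n : nat, (N <= n)%N ->
    exists (w : nat -> R) (B : nat),
      (forall i, (1 <= i <= n)%N -> 0 < w i) /\
      (forall i j, (1 <= i)%N -> (i <= j)%N -> (j <= n)%N -> w i <= w j) /\
      (1 <= B <= n)%N /\
      expected_time_ge n w B (c * (n ^ 2)%:R).
Proof.
exists (1 / 64); split; first lra.
exists 4%N => n hn.
case: n hn => [//|m] hn.
exists wt, 1%N; split.
  by move=> i _; rewrite /wt; case: (i == 1%N); lra.
split.
  move=> i j hi hij hjn; rewrite /wt.
  case: (i =P 1%N) => [_|ni]; case: (j =P 1%N) => [ej|nj]; try lra.
  exfalso; lia.
split; first by apply/andP; split => //; lia.
move=> eps he; exists (m.+1 * m)%N.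
have hm : (2 < m)%N by lia.
have ht := total_bound hm.
have : (((m.+1 ^ 2)%N)%:R <= ((m.+1 * m + m.+1 * m)%N)%:R :> R) by rewrite ler_nat; nia.
rewrite natrD; move: ht.
set s := \sum_(t < _) _; set k := ((m.+1 * m)%N)%:R; set p := ((m.+1 ^ 2)%N)%:R.
move=> h1 h2; lra.
Qed.
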